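(* Let $1\ge l_1\ge l_2\ge\dots\ge l_p>0$ and let $\Omega=J_l$ be the sorted $\ell_1$ (SLOPE) norm. Fix $J\subset\{1,\dots,p\}$ and let $g$ be the gauge norm described in the context, built from all subsets $S\subset\{1,\dots,p\}$ as allowed sets. Then $g(\beta)=l_p\|\beta\|_1$ for all $\beta\in\mathbb{R}^p$.
   Context: $J_l(\beta):=l_1|\beta|_{(1)}+\dots+l_p|\beta|_{(p)}$, where $|\beta|_{(1)}\ge\dots\ge|\beta|_{(p)}$ are the ordered absolute values of the entries of $\beta$. For $S\subset\{1,\dots,p\}$, $\beta_S$ is the vector with entries $\beta_j1\{j\in S\}$, and $|\beta|_{(1,S)}\ge\dots\ge|\beta|_{(|S|,S)}$ denote the ordered values of $\{|\beta_j|:j\in S\}$. Every $S$ is allowed, with $\Omega^{S^{c}}(\beta_{S^{c}}):=\sum_{i=1}^{|S^{c}|}l_{|S|+i}|\beta|_{(i,S^{c})}$, and $\Upsilon_S(\beta):=J_l(\beta_S)+\Omega^{S^{c}}(\beta_{S^{c}})=\sum_{j=1}^{|S|}l_j|\beta|_{(j,S)}+\sum_{i=1}^{|S^{c}|}l_{|S|+i}|\beta|_{(i,S^{c})}$. Let $\beta_{f(J)}:=\beta_J-\beta_{J^{c}}$, $\mathrm{flip}_J(B):=\{\beta_{f(J)}:\beta\in B\}$, $\overline{B}:=\bigcup_{S}\{\beta:\Upsilon_S(\beta)\le1\}$, $B_g:=\mathrm{Conv}(\overline{B}\cup\mathrm{flip}_J(\overline{B}))$, and $g(x):=\inf\{t>0:x\in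 tB_g\}$. *)

(* Defs.v *)
From HB Require Import structures.
From mathcomp Require Import all_boot all_order all_algebra.
From mathcomp Require Import classical_sets reals.
Set Implicit Arguments. Unset Strict Implicit. Unset Printing Implicit Defensive.
Import Order.TTheory GRing.Theory Num.Theory.
Local Open Scope ring_scope.
Local Open Scope classical_set_scope.

Section SlopeGauge.
Variables (R : realType) (p : nat).

Definition vec := 'rV[R]_p.

(* weights l_1,...,l_p as a sequence (index k of the seq = l_{k+1}) *)
Definition lseq (l : 'I_p -> R) : seq R := [seq l i | i <- enum 'I_p].

(* |b|_(1,S) >= ... >= |b|_(|S|,S): the decreasingly sorted |b_j|, j in S *)
Definition sorted_abs (b : vec) (S : {set 'I_p}) : seq R :=
  sort (fun x y => y <= x) [seq `|b ord0 j| | j in S].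

Definition wsum (w s : seq R) : R := \sum_(k < size s) w`_k * s`_k.

Definition J_l (l : 'I_p -> R) (b : vec) : R := wsum (lseq l) (sorted_abs b [set: 'I_p]%SET).

Definition restr (b : vec) (S : {set 'I_p}) : vec :=
  \row_j (if j \in S then b ord0 j else 0).

(* Omega^{S^c}(b_{S^c}) = sum_{i=1}^{|S^c|} l_{|S|+i} |b|_(i,S^c) *)
Definition Omega_c (l : 'I_p -> R) (S : {set 'I_p}) (b : vec) : R :=
  wsum (drop #|S| (lseq l)) (sorted_abs b (~: S)).

Definition Upsilon (l : 'I_p -> R) (S : {set 'I_p}) (b : vec) : R :=
  J_l l (restr b S) + Omega_c l S (restr b (~: S)).

Definition flipv (J : {set 'I_p}) (b : vec) : vec := restr b J - restr b (~: J).

Definition flipset (J : {set 'I_p}) (B : set vec) : set vec := flipv J @` B.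

Definition Bbar (l : 'I_p -> R) : set vec :=
  [set b | exists S : {set 'I_p}, Upsilon l S b <= 1].

Definition conv_hull (A : set vec) : set vec :=
  [set x | exists n (w : 'I_n -> R) (y : 'I_n -> vec),
     (forall k, 0 <= w k) /\ \sum_(k < n) w k = 1 /\
     (forall k, A (y k)) /\ x = \sum_(k < n) w k *: y k].

Definition Bg (l : 'I_p -> R) (J : {set 'I_p}) : set vec :=
  conv_hull (Bbar l `|` flipset J (Bbar l)).

Definition gauge (l : 'I_p -> R) (J : {set 'I_p}) (x : vec) : R :=
  inf [set t : R | 0 < t /\ exists2 y, Bg l J y & x = t *: y].

Definition norm1 (b : vec) : R := \sum_j `|b ord0 j|.

End SlopeGauge.

(* Main.v *)
Require Import Defs.
From HB Require Import structures.
From mathcomp Require Import all_boot all_order all_algebra.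
From mathcomp Require Import classical_sets reals.
From mathcomp Require Import ring lra.
Import Order.TTheory GRing.Theory Num.Theory.
Local Open Scope ring_scope.
Local Open Scope classical_set_scope.

Section Aux.
Variables (R : realType).

Lemma wsum_ge (c : R) (w s : seq R) :
  (forall x, x \in w -> c <= x) -> (size s <= size w)%N ->
  (forall x, x \in s -> 0 <= x) ->
  c * \sum_(x <- s) x <= wsum w s.
Proof.
move=> hw hsz hs; rewrite /wsum (big_nth 0) big_mkord mulr_sumr.
apply: ler_sum => k _; rewrite ler_wpM2r //.
  by apply: hs; apply: mem_nth.
by apply: hw; apply: mem_nth; apply: leq_trans hsz.
Qed.

Lemma wsum0 (w s : seq R) : (forall x, x \in s -> x = 0) -> wsum w s = 0.
Proof.
move=> hs; rewrite /wsum big1 // => k _.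
by rewrite (hs _ (mem_nth 0 (ltn_ord k))) mulr0.
Qed.

Variable p : nat.

Lemma sum_sorted (b : vec R p) S :
  \sum_(x <- sorted_abs b S) x = \sum_(j in S) `|b ord0 j|.
Proof.
rewrite /sorted_abs (perm_big _ (permEl (perm_sort _ _))) /= big_map big_enum //.
Qed.

Lemma sorted_ge0 (b : vec R p) S x : x \in sorted_abs b S -> 0 <= x.
Proof. by rewrite mem_sort => /mapP [j _ ->]. Qed.

Lemma size_sorted (b : vec R p) S : size (sorted_abs b S) = #|S|.
Proof. by rewrite /sorted_abs size_sort size_map -cardE. Qed.

Lemma norm1_restr (b : vec R p) (S : {set 'I_p}) : norm1 (restr b S) = \sum_(j in S) `|b ord0 j|.
Proof.
rewrite /norm1 (bigID (fun j => j \in S)) /= [X in _ + X]big1 ?addr0.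
  by apply: eq_bigr => j jS; rewrite mxE jS.
by move=> j /negbTE jS; rewrite mxE jS normr0.
Qed.

Lemma norm1_split (b : vec R p) (S : {set 'I_p}) :
  \sum_(j in S) `|b ord0 j| + \sum_(j in ~: S) `|b ord0 j| = norm1 b.
Proof.
rewrite /norm1 [RHS](bigID (fun j => j \in S)) /=; congr (_ + _).
by apply: eq_bigl => j; rewrite inE.
Qed.

Variable l : 'I_p -> R.
Variable c : R.
Hypothesis hc : forall x, x \in lseq l -> c <= x.
Hypothesis c0 : 0 < c.

Lemma size_lseq : size (lseq l) = p.
Proof. by rewrite /lseq size_map size_enum_ord. Qed.

Lemma ups_ge S (b : vec R p) : c * norm1 b <= Upsilon l S b.
Proof.
rewrite /Upsilon -(norm1_split b S) mulrDr; apply: lerD.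
  rewrite /J_l -(norm1_restr b S) /norm1.
  have -> : \sum_j `|restr b S ord0 j| = \sum_(j in [set: 'I_p]%SET) `|restr b S ord0 j|.
    by apply: eq_bigl => j; rewrite inE.
  rewrite -(sum_sorted _ [set: 'I_p]%SET).
  apply: wsum_ge => //; last by move=> x /sorted_ge0.
  by rewrite size_sorted size_lseq cardsT card_ord.
rewrite /Omega_c.
have -> : \sum_(j in ~: S) `|b ord0 j| = \sum_(j in ~: S) `|restr b (~: S) ord0 j|.
  by apply: eq_bigr => j jS; rewrite mxE jS.
rewrite -sum_sorted; apply: wsum_ge.
- by move=> x /mem_drop; apply: hc.
- rewrite size_sorted size_drop size_lseq.
  have := cardsC S; rewrite card_ord => hC; rewrite leq_subRL ?hC //; by rewrite -[X in (_ <= X)%N]hC leq_addr.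
- by move=> x /sorted_ge0.
Qed.

Lemma flip_norm J (b : vec R p) : norm1 (flipv J b) = norm1 b.
Proof.
rewrite /norm1; apply: eq_bigr => j _; rewrite !mxE inE.
by case: (j \in J) => /=; rewrite ?subr0 ?sub0r ?normrN.
Qed.

Lemma Bg_le J x : Bg l J x -> c * norm1 x <= 1.
Proof.
move=> [n [w [y [w0 [w1 [hy ->]]]]]].
have hyk : forall k, c * norm1 (y k) <= 1.
  move=> k; case: (hy k) => [[S hS]|[z [S hS] <-]].
    exact: le_trans (ups_ge S _) hS.
  by rewrite flip_norm; exact: le_trans (ups_ge S _) hS.
apply: (@le_trans _ _ (\sum_(k < n) w k * (c * norm1 (y k)))).
  rewrite /norm1.
  apply: (@le_trans _ _ (c * \sum_j \sum_(k < n) w k * `|y k ord0 j|)).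
    rewrite ler_pM2l // ; apply: ler_sum => j _.
    rewrite summxE; apply: le_trans (ler_norm_sum _ _ _) _.
    apply: ler_sum => k _; rewrite mxE normrM ger0_norm //.
  rewrite exchange_big mulr_sumr; apply: ler_sum => k _.
  by rewrite mulr_sumr mulr_sumr mulr_sumr; apply: ler_sum => j _; rewrite mulrCA.
rewrite -w1; apply: ler_sum => k _.
by rewrite -[X in _ <= X]mulr1 ler_wpM2l.
Qed.

Hypothesis hlast : (0 < p)%N -> (lseq l)`_p.-1 = c.

Lemma supp_Bbar (j : 'I_p) (v : vec R p) :
  (forall i, i != j -> v ord0 i = 0) -> `|v ord0 j| <= c^-1 -> Bbar l v.
Proof.
move=> hv hvj; exists (~: [set j]); rewrite /Upsilon.
have -> : J_l l (restr v (~: [set j])) = 0.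
  apply: wsum0 => x; rewrite mem_sort => /mapP [i _ ->].
  rewrite mxE !inE; case: eqP => [_|/eqP ij] /=; last by rewrite hv ?normr0.
  by rewrite normr0.
rewrite add0r /Omega_c finset.setCK /sorted_abs /image_mem -[enum_mem _]/(enum [set j]%SET) enum_set1 /= /wsum big_ord1 /=.
rewrite mxE inE eqxx cardsC1 card_ord nth_drop addn0 hlast; last exact: (leq_ltn_trans (leq0n j) (ltn_ord j)).
by rewrite -(ler_pM2l c0) mulfV ?gt_eqF // in hvj.
Qed.

End Aux.

Lemma norm1Z (R : realType) (p : nat) (t : R) (y : vec R p) :
  norm1 (t *: y) = `|t| * norm1 y.
Proof. by rewrite /norm1 mulr_sumr; apply: eq_bigr => j _; rewrite mxE normrM. Qed.

Theorem lemma4 (R : realType) (p : nat) (l : 'I_p -> R) (J : {set 'I_p}) :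
  (0 < p)%N ->
  (forall i, l i <= 1) ->
  (forall i j : 'I_p, (i <= j)%N -> l j <= l i) ->
  (forall i, 0 < l i) ->
  forall beta : 'rV[R]_p, gauge l J beta = last 0 (lseq l) * norm1 beta.
Proof.
move=> p0 l1 lmono lpos beta.
set c := last 0 (lseq l).
have hlast : (0 < p)%N -> (lseq l)`_p.-1 = c.
  by move=> _; rewrite /c -nth_last size_lseq.
have pm1lt : (p.-1 < p)%N by rewrite prednK.
set pm1 : 'I_p := Ordinal pm1lt.
have hcl : c = l pm1.
  rewrite -hlast // /lseq (nth_map pm1) ?size_enum_ord //.
  by congr l; apply: val_inj; rewrite /= nth_enum_ord.
have c0 : 0 < c by rewrite hcl.
have hc : forall x, x \in lseq l -> c <= x.
  move=> x /mapP [i _ ->]; rewrite hcl; apply: lmono => /=.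
  by rewrite -ltnS prednK.
have Bbar0 : Bbar l (0 : vec R p).
  apply: (@supp_Bbar _ _ l c c0 hlast pm1) => [i _|]; first by rewrite mxE.
  by rewrite mxE normr0 invr_ge0 ltW.
have Bg0 : Bg l J (0 : vec R p).
  exists 1%N, (fun _ => 1), (fun _ => 0); split => //; split; first by rewrite big_ord1.
  split; first by move=> k; left.
  by rewrite big1 // => k _; rewrite scaler0.
rewrite /gauge.
have [N0|Nn0] := eqVneq (norm1 beta) 0.
  have b0 : beta = 0.
    apply/rowP => i; rewrite mxE; apply/normr0_eq0.
    move/eqP: N0; rewrite /norm1 psumr_eq0 // => /allP /(_ i (mem_index_enum _)).
    by move/implyP => /(_ isT) /eqP.
  rewrite N0 mulr0 b0.
  have inE' : forall t : R, 0 < t -> [set t : R | 0 < t /\ exists2 y, Bg l J y & (0 : vec R p) = t *: y] t.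
    by move=> t t0; split => //; exists 0 => //; rewrite scaler0.
  apply/eqP; rewrite eq_le; apply/andP; split.
    rewrite leNgt; apply/negP => h.
    have hlb : has_lbound [set t : R | 0 < t /\ exists2 y, Bg l J y & (0 : vec R p) = t *: y].
      by exists 0 => t [t0 _]; apply: ltW.
    have := ge_inf hlb (inE' _ (divr_gt0 h (ltr0n _ 2))).
    rewrite ler_pdivlMr ?ltr0n // => h2.
    move: h2 h; set I := inf _ => h2 h; lra.
  apply: lb_le_inf; first by exists 1; apply: inE'.
  by move=> t [t0 _]; apply: ltW.
have N0 : 0 < norm1 beta by rewrite lt0r Nn0 /norm1 sumr_ge0.
set t := c * norm1 beta.
have t0 : 0 < t by rewrite mulr_gt0.
have tin : [set t : R | 0 < t /\ exists2 y, Bg l J y & beta = t *: y] t.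
  split => //; exists (t^-1 *: beta); last by rewrite scalerA mulfV ?gt_eqF // scale1r.
  exists p, (fun k => `|beta ord0 k| / norm1 beta),
    (fun k => \row_i (if i == k then beta ord0 i / (c * `|beta ord0 i|) else 0)).
  split; first by move=> k; rewrite divr_ge0 // ltW.
  split; first by rewrite -mulr_suml mulfV.
  split.
    move=> k; left; apply: (@supp_Bbar _ _ l c c0 hlast k).
      by move=> i /negbTE ik; rewrite mxE ik.
    rewrite mxE eqxx; have [->|bk] := eqVneq (beta ord0 k) 0.
      by rewrite mul0r normr0 invr_ge0 ltW.
    rewrite normrM normfV normrM normr_id (gtr0_norm c0) invfM mulrCA mulfV.
      by rewrite mulr1.
    by rewrite normr_eq0.
  apply/rowP => i; rewrite !mxE summxE (bigD1 i) //= big1 ?addr0.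
    rewrite !mxE eqxx; have [->|bi] := eqVneq (beta ord0 i) 0.
      by rewrite !(mulr0, mul0r).
    have ai : `|beta ord0 i| != 0 by rewrite normr_eq0.
    have cn : c != 0 by rewrite gt_eqF.
    rewrite /t; field.
    by rewrite ai cn Nn0.
  by move=> k ki; rewrite !mxE eq_sym (negbTE ki) mulr0.
apply/eqP; rewrite eq_le; apply/andP; split.
  apply: (ge_inf _ tin).
  by exists 0 => s [s0 _]; apply: ltW.
apply: lb_le_inf; first by exists t.
move=> s [s0 [y hy eb]]; rewrite /t eb.
rewrite norm1Z (gtr0_norm s0) mulrCA.
by rewrite -[X in _ <= X]mulr1 ler_wpM2l ?(ltW s0) //; exact: (@Bg_le _ _ l c hc c0 J y hy).
Qed.
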